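(* Let $J$ be a positive integer, $\Delta>0$, and $w_j=(j-\tfrac12)\Delta$ for $j=1,\dots,J$. For $x\in(0,1]$, $w\in\mathbb R$ and $j\in\{1,\dots,J\}$ define $\tau(x,w,j)\in\mathbb R^2$ by $$\tau(x,w,j)=\left[\cos(w\ln x)\sqrt{2x\int_{(j-1)\Delta}^{j\Delta}\rho(w')dw'},\ \sin(w\ln x)\sqrt{2x\int_{(j-1)\Delta}^{j\Delta}\rho(w')dw'}\right].$$ Then for all $x,y\in(0,1]$, $$\left|\int_{-\Delta J}^{\Delta J}\Phi_w(x)^*\Phi_w(y)\,dw-\left\langle\bigoplus_{j=1}^J\tau(x,w_j,j),\ \bigoplus_{j=1}^J\tau(y,w_j,j)\right\rangle\right|\le 2\Delta,$$ where $\bigoplus$ denotes concatenation of vectors and $\langle\cdot,\cdot\rangle$ the Euclidean inner product.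
   Context: $\rho(w)=\frac{2\,\mathrm{sech}(\pi w)}{1+4w^2}$; $\Phi_w(x)=e^{-iw\ln x}\sqrt{x\rho(w)}$; ${}^*$ denotes complex conjugation. *)

(* Defs.v *)
From Stdlib Require Import Reals Lra Classical ClassicalEpsilon.
Open Scope R_scope.

(* Total Riemann integral: the value of RiemannInt when f is Riemann
   integrable on [a,b] (proof-independent, RiemannInt_P5); unspecified otherwise (the integrands below are continuous, so this is the usual integral). *)
Definition Rint (f : R -> R) (a b : R) : R :=
  epsilon (inhabits 0)
    (fun v => exists pr : Riemann_integrable f a b, RiemannInt pr = v).

Definition sech (t : R) : R := 2 / (exp t + exp (- t)).

Definition rho (w : R) : R := 2 * sech (PI * w) / (1 + 4 * w ^ 2).

(* Phi_w(x) = e^{-i w ln x} sqrt(x rho(w)), as (real part, imaginary part) *)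
Definition Phi_re (w x : R) : R := cos (w * ln x) * sqrt (x * rho w).
Definition Phi_im (w x : R) : R := - sin (w * ln x) * sqrt (x * rho w).

(* Phi_w(x)^* Phi_w(y) = (a - i b)(c + i d), a+ib = Phi_w(x), c+id = Phi_w(y) *)
Definition conjprod_re (x y w : R) : R :=
  Phi_re w x * Phi_re w y + Phi_im w x * Phi_im w y.
Definition conjprod_im (x y w : R) : R :=
  Phi_re w x * Phi_im w y - Phi_im w x * Phi_re w y.

Definition tau (Delta x w : R) (j : nat) : R * R :=
  let s := sqrt (2 * x * Rint rho ((INR j - 1) * Delta) (INR j * Delta)) in
  (cos (w * ln x) * s, sin (w * ln x) * s).

Definition inner2 (u v : R * R) : R := fst u * fst v + snd u * snd v.

Definition wj (Delta : R) (j : nat) : R := (INR j - 1 / 2) * Delta.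

(* < (+)_{j=1}^J tau(x,w_j,j), (+)_{j=1}^J tau(y,w_j,j) > : the Euclidean inner
   product of the concatenations, i.e. the sum over j = 1..J of the 2D inner products *)
Definition concat_inner (J : nat) (Delta x y : R) : R :=
  sum_f_R0 (fun k => inner2 (tau Delta x (wj Delta (S k)) (S k))
                            (tau Delta y (wj Delta (S k)) (S k))) (J - 1).

Definition cmod (re im : R) : R := sqrt (re ^ 2 + im ^ 2).

(* Main.v *)
Require Import Defs.
From Coquelicot Require Import Coquelicot.
From Stdlib Require Import Reals Lra Lia ClassicalEpsilon FunctionalExtensionality.
Open Scope R_scope.

Lemma exp_sum_pos t : 0 < exp t + exp (- t).
Proof. pose proof (exp_pos t); pose proof (exp_pos (-t)); lra. Qed.

Lemma rho_pos w : 0 < rho w.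
Proof.
  unfold rho, sech. pose proof (exp_sum_pos (PI*w)).
  assert (0 < 1 + 4 * w^2) by nra.
  apply Rdiv_lt_0_compat; [|lra].
  apply Rmult_lt_0_compat; [lra|]. apply Rdiv_lt_0_compat; lra.
Qed.

Lemma rho_le w : rho w <= 2 / (1 + 4 * w^2).
Proof.
  unfold rho, sech.
  assert (H2 : 2 <= exp (PI*w) + exp (-(PI*w))).
  { pose proof (exp_ineq1_le (PI*w)); pose proof (exp_ineq1_le (-(PI*w))); lra. }
  assert (0 < 1 + 4 * w^2) by nra.
  unfold Rdiv. apply Rmult_le_compat_r. apply Rlt_le, Rinv_0_lt_compat; lra.
  assert (2 * / (exp (PI * w) + exp (- (PI * w))) <= 1).
  { apply (Rmult_le_reg_r (exp (PI * w) + exp (- (PI * w)))). lra.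
    rewrite Rmult_assoc, Rinv_l by lra. lra. }
  lra.
Qed.

Lemma rho_cont w : continuous rho w.
Proof. apply (ex_derive_continuous (K:=R_AbsRing) (V:=R_NormedModule)). unfold rho, sech. auto_derive.
  pose proof (exp_sum_pos (PI*w)). split; [lra|]. split; [nra|auto]. Qed.

Lemma Rint_RInt (f : R -> R) a b : ex_RInt f a b -> Rint f a b = RInt f a b.
Proof.
  intros H. unfold Rint.
  destruct (epsilon_spec (inhabits 0) (fun v => exists pr : Riemann_integrable f a b, RiemannInt pr = v)) as [pr Hpr].
  { exists (RiemannInt (ex_RInt_Reals_0 f a b H)). exists (ex_RInt_Reals_0 f a b H). reflexivity. }
  rewrite <- Hpr. symmetry. apply RInt_Reals.
Qed.

Lemma ex_RInt_cont (f : R -> R) a b : (forall w, continuous f w) -> ex_RInt f a b.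
Proof. intros H. apply (ex_RInt_continuous (V:=R_CompleteNormedModule)). intros; apply H. Qed.

Lemma RInt_scal_R (f : R -> R) a b k : ex_RInt f a b -> RInt (fun w => k * f w) a b = k * RInt f a b.
Proof. intros H. apply (RInt_scal f a b k H). Qed.

Lemma cos_lip u v : Rabs (cos u - cos v) <= Rabs (u - v).
Proof.
  destruct (MVT_abs cos (fun c => - sin c) v u) as [c [Hc _]].
  { intros; apply derivable_pt_lim_cos. }
  rewrite Hc. rewrite Rabs_Ropp. pose proof (SIN_bound c).
  assert (Rabs (sin c) <= 1) by (apply Rabs_le; lra).
  pose proof (Rabs_pos (u - v)). nra.
Qed.

Lemma sqrt_ln y : 0 < y <= 1 -> sqrt y * (- ln y) <= 2 / exp 1.
Proof.
  intros [Hy Hy1]. set (s := sqrt y).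
  assert (Hs : 0 < s) by (apply sqrt_lt_R0; lra).
  assert (Hys : y = s * s) by (unfold s; rewrite sqrt_sqrt; lra).
  assert (Hl : ln y = ln s + ln s) by (rewrite Hys, ln_mult; auto).
  pose proof (exp_pos 1) as He.
  pose proof (exp_ineq1_le (ln (/ (exp 1 * s)))) as H.
  rewrite exp_ln in H by (apply Rinv_0_lt_compat; nra).
  rewrite ln_Rinv, ln_mult, ln_exp in H by nra.
  rewrite Hl.
  assert (s * (- ln s) <= / exp 1).
  { assert (s * / (exp 1 * s) = / exp 1) by (field; lra).
    assert (- ln s <= / (exp 1 * s)) by lra. nra. }
  unfold Rdiv. lra.
Qed.
Definition KK x y := sqrt (x * y).
Definition LL x y := ln x - ln y.
Definition gg x y w := KK x y * rho w * cos (w * LL x y).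
Definition hh x y w := KK x y * rho w * sin (w * LL x y).

Lemma gg_cont x y w : continuous (gg x y) w.
Proof. apply (ex_derive_continuous (K:=R_AbsRing) (V:=R_NormedModule)).
  unfold gg, rho, sech. auto_derive.
  pose proof (exp_sum_pos (PI*w)). split; [lra|]. split; [nra|auto]. Qed.

Lemma hh_cont x y w : continuous (hh x y) w.
Proof. apply (ex_derive_continuous (K:=R_AbsRing) (V:=R_NormedModule)).
  unfold hh, rho, sech. auto_derive.
  pose proof (exp_sum_pos (PI*w)). split; [lra|]. split; [nra|auto]. Qed.

Lemma sqrt_prod x y r : 0 < x -> 0 < y -> 0 <= r ->
  sqrt (x * r) * sqrt (y * r) = sqrt (x * y) * r.
Proof.
  intros. rewrite !sqrt_mult by nra.
  replace (sqrt x * sqrt r * (sqrt y * sqrt r)) with (sqrt x * sqrt y * (sqrt r * sqrt r)) by ring.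
  rewrite sqrt_sqrt; auto.
Qed.

Lemma conjprod_re_eq x y w : 0 < x -> 0 < y -> conjprod_re x y w = gg x y w.
Proof.
  intros. unfold conjprod_re, gg, Phi_re, Phi_im, KK, LL.
  pose proof (rho_pos w). pose proof (sqrt_prod x y (rho w) H H0 ltac:(lra)).
  replace (w * (ln x - ln y)) with (w * ln x - w * ln y) by ring.
  rewrite cos_minus.
  transitivity ((cos (w * ln x) * cos (w * ln y) + sin (w * ln x) * sin (w * ln y)) *
     (sqrt (x * rho w) * sqrt (y * rho w))); [ring|]. rewrite H2. ring.
Qed.

Lemma conjprod_im_eq x y w : 0 < x -> 0 < y -> conjprod_im x y w = hh x y w.
Proof.
  intros. unfold conjprod_im, hh, Phi_re, Phi_im, KK, LL.
  pose proof (rho_pos w). pose proof (sqrt_prod x y (rho w) H H0 ltac:(lra)).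
  replace (w * (ln x - ln y)) with (w * ln x - w * ln y) by ring.
  rewrite sin_minus.
  transitivity ((sin (w * ln x) * cos (w * ln y) - cos (w * ln x) * sin (w * ln y)) *
     (sqrt (x * rho w) * sqrt (y * rho w))); [ring|]. rewrite H2. ring.
Qed.

Lemma cont_opp_arg (f : R -> R) : (forall w, continuous f w) -> forall w, continuous (fun w => f (- w)) w.
Proof.
  intros Hc w. apply (continuous_comp (U:=R_UniformSpace) (V:=R_UniformSpace) (fun w => - w) f).
  - apply (continuous_opp (K:=R_AbsRing) (V:=R_NormedModule) (fun y => y)). apply continuous_id.
  - apply Hc.
Qed.

Lemma RInt_opp_arg (f : R -> R) a b : (forall w, continuous f w) ->
  RInt (fun w => f (- w)) a b = - RInt f (- a) (- b).
Proof.
  intros Hc.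
  pose proof (RInt_comp_lin f (-1) 0 a b) as H.
  replace (-1 * a + 0) with (-a) in H by ring.
  replace (-1 * b + 0) with (-b) in H by ring.
  rewrite <- H by (apply ex_RInt_cont; auto).
  rewrite (RInt_ext (fun y => scal (-1) (f (-1 * y + 0))) (fun y => -1 * f (- y))).
  - assert (Hr : forall r : R, r = - (-1 * r)) by (intros; ring). rewrite RInt_scal_R; [apply Hr|]. apply ex_RInt_cont. exact (cont_opp_arg f Hc).
  - intros. unfold scal; simpl; unfold mult; simpl.
    replace (-1 * x + 0) with (-x) by ring. ring.
Qed.

Lemma RInt_even (f : R -> R) T : (forall w, continuous f w) -> (forall w, f (-w) = f w) ->
  RInt f (-T) T = 2 * RInt f 0 T.
Proof.
  intros Hc He.
  rewrite <- (RInt_Chasles f (-T) 0 T) by (apply ex_RInt_cont; auto).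
  assert (RInt f 0 T = - RInt f 0 (-T)).
  { rewrite <- (RInt_ext (fun w => f (-w))) by (intros; auto).
    rewrite RInt_opp_arg by auto. rewrite Ropp_0. reflexivity. }
  rewrite H. rewrite <- (opp_RInt_swap f) by (apply ex_RInt_cont; auto).
  unfold plus, opp; simpl. ring.
Qed.

Lemma RInt_odd (f : R -> R) T : (forall w, continuous f w) -> (forall w, f (-w) = - f w) ->
  RInt f (-T) T = 0.
Proof.
  intros Hc He.
  rewrite <- (RInt_Chasles f (-T) 0 T) by (apply ex_RInt_cont; auto).
  assert (RInt f 0 T = RInt f 0 (-T)).
  { rewrite (RInt_ext f (fun w => -1 * f (-w))) by (intros x _; rewrite He; assert (Hr: forall r:R, r = -1 * - r) by (intros; ring); apply Hr).
    rewrite RInt_scal_R.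
    rewrite RInt_opp_arg by auto. rewrite Ropp_0. assert (Hr : forall r:R, -1 * - r = r) by (intros; ring). apply Hr.
    apply ex_RInt_cont. exact (cont_opp_arg f Hc). }
  rewrite H. rewrite <- (opp_RInt_swap f) by (apply ex_RInt_cont; auto).
  unfold plus, opp; simpl. ring.
Qed.

Lemma RInt_sum (f : R -> R) D m : (forall w, continuous f w) ->
  RInt f 0 (INR (S m) * D) = sum_f_R0 (fun k => RInt f (INR k * D) (INR (S k) * D)) m.
Proof.
  intros Hc. induction m.
  - simpl. rewrite Rmult_0_l. reflexivity.
  - rewrite tech5, <- IHm.
    rewrite <- (RInt_Chasles f 0 (INR (S m) * D) (INR (S (S m)) * D)) by (apply ex_RInt_cont; auto).
    reflexivity.
Qed.

Lemma piece (f : R -> R) a b c M : a <= b -> (forall w, continuous f w) ->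
  (forall w, a < w < b -> Rabs (f w - c * rho w) <= M * rho w) ->
  Rabs (RInt f a b - c * RInt rho a b) <= M * RInt rho a b.
Proof.
  intros Hab Hc Hb.
  assert (Hr : ex_RInt rho a b) by (apply ex_RInt_cont, rho_cont).
  assert (Hf : ex_RInt f a b) by (apply ex_RInt_cont; auto).
  rewrite <- !RInt_scal_R by auto.
  assert (H1 : RInt f a b <= RInt (fun w => (c + M) * rho w) a b).
  { apply RInt_le; auto. apply ex_RInt_cont; intro w.
    apply (ex_derive_continuous (K:=R_AbsRing) (V:=R_NormedModule)). unfold rho, sech. auto_derive.
    pose proof (exp_sum_pos (PI*w)). split; [lra|]. split; [nra|auto].
    intros w Hw. specialize (Hb w Hw). apply Rabs_le_between in Hb. lra. }
  assert (H2 : RInt (fun w => (c - M) * rho w) a b <= RInt f a b).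
  { apply RInt_le; auto. apply ex_RInt_cont; intro w.
    apply (ex_derive_continuous (K:=R_AbsRing) (V:=R_NormedModule)). unfold rho, sech. auto_derive.
    pose proof (exp_sum_pos (PI*w)). split; [lra|]. split; [nra|auto].
    intros w Hw. specialize (Hb w Hw). apply Rabs_le_between in Hb. lra. }
  rewrite !RInt_scal_R in H1, H2 by auto. rewrite !RInt_scal_R by auto.
  apply Rabs_le. lra.
Qed.

Lemma rho_int_bound T : 0 <= T -> RInt rho 0 T <= PI / 2.
Proof.
  intros HT.
  assert (Hr : ex_RInt rho 0 T) by (apply ex_RInt_cont, rho_cont).
  assert (Hd : is_RInt (fun w => 2 / (1 + 4 * w^2)) 0 T (minus (atan (2 * T)) (atan (2 * 0)))).
  { apply (is_RInt_derive (V:=R_CompleteNormedModule) (fun w => atan (2 * w))).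
    - intros w _.
      replace (2 / (1 + 4 * w^2)) with (scal 2 (/ (1 + (2 * w)²))).
      2:{ unfold scal; simpl; unfold mult; simpl. unfold Rsqr. field. nra. }
      apply (is_derive_comp atan (fun w => 2 * w)). apply is_derive_atan.
      auto_derive; auto. ring.
    - intros w _. apply (ex_derive_continuous (K:=R_AbsRing) (V:=R_NormedModule)).
      auto_derive. nra. }
  apply (is_RInt_unique (V:=R_CompleteNormedModule)) in Hd.
  apply Rle_trans with (RInt (fun w => 2 / (1 + 4 * w^2)) 0 T).
  - apply RInt_le; auto.
    + eexists; apply (RInt_correct (V:=R_CompleteNormedModule)). apply ex_RInt_cont. intro w.
      apply (ex_derive_continuous (K:=R_AbsRing) (V:=R_NormedModule)). auto_derive. nra.
    + intros; apply rho_le.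
  - rewrite Hd. unfold minus, plus, opp; simpl. rewrite Rmult_0_r, atan_0.
    pose proof (atan_bound (2 * T)). lra.
Qed.

Lemma KL_bound x y : 0 < x <= 1 -> 0 < y <= 1 -> KK x y * Rabs (LL x y) <= 2 / exp 1.
Proof.
  intros Hx Hy. unfold KK, LL. rewrite sqrt_mult by lra.
  pose proof (sqrt_ln x Hx). pose proof (sqrt_ln y Hy).
  assert (Hlx : ln x <= 0) by (rewrite <- ln_1; apply ln_le; lra).
  assert (Hly : ln y <= 0) by (rewrite <- ln_1; apply ln_le; lra).
  assert (0 < sqrt x) by (apply sqrt_lt_R0; lra).
  assert (0 < sqrt y) by (apply sqrt_lt_R0; lra).
  assert (sqrt x <= 1) by (rewrite <- sqrt_1; apply sqrt_le_1_alt; lra).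
  assert (sqrt y <= 1) by (rewrite <- sqrt_1; apply sqrt_le_1_alt; lra).
  destruct (Rle_dec (ln x) (ln y)).
  - rewrite Rabs_left1 by lra.
    assert (sqrt y * (ln y - ln x) <= (ln y - ln x)) by nra.
    assert (sqrt x * (sqrt y * (ln y - ln x)) <= sqrt x * (- ln x)) by nra.
    replace (sqrt x * sqrt y * - (ln x - ln y)) with (sqrt x * (sqrt y * (ln y - ln x))) by ring.
    lra.
  - rewrite Rabs_right by lra.
    assert (sqrt x * (ln x - ln y) <= (ln x - ln y)) by nra.
    assert (sqrt y * (sqrt x * (ln x - ln y)) <= sqrt y * (- ln y)) by nra.
    replace (sqrt x * sqrt y * (ln x - ln y)) with (sqrt y * (sqrt x * (ln x - ln y))) by ring.
    lra.
Qed.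

Lemma rho_even w : rho (- w) = rho w.
Proof. unfold rho, sech. replace (PI * - w) with (- (PI * w)) by ring.
  rewrite Ropp_involutive. replace ((- w) ^ 2) with (w ^ 2) by ring.
  rewrite (Rplus_comm (exp (- (PI * w)))). reflexivity. Qed.

Lemma sum_lin (A B : nat -> R) n :
  sum_f_R0 (fun k => 2 * (A k - B k)) n = 2 * sum_f_R0 A n - sum_f_R0 (fun k => 2 * B k) n.
Proof. induction n; simpl; [ring|]. rewrite IHn. ring. Qed.

Lemma sum_scal (A : nat -> R) c n :
  sum_f_R0 (fun k => c * A k) n = c * sum_f_R0 A n.
Proof. induction n; simpl; [ring|]. rewrite IHn. ring. Qed.

Theorem lemma5 (J : nat) (Delta x y : R) :
  (0 < J)%nat -> 0 < Delta ->
  0 < x <= 1 -> 0 < y <= 1 ->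
  cmod (Rint (conjprod_re x y) (- (Delta * INR J)) (Delta * INR J)
          - concat_inner J Delta x y)
       (Rint (conjprod_im x y) (- (Delta * INR J)) (Delta * INR J))
  <= 2 * Delta.
Proof.
  intros HJ HD Hx Hy. destruct J as [|m]; [lia|].
  assert (Ere : conjprod_re x y = gg x y).
  { apply functional_extensionality; intro w; apply conjprod_re_eq; lra. }
  assert (Eim : conjprod_im x y = hh x y).
  { apply functional_extensionality; intro w; apply conjprod_im_eq; lra. }
  rewrite Ere, Eim.
  rewrite (Rint_RInt (gg x y)) by (apply ex_RInt_cont; intro w; apply gg_cont).
  rewrite (Rint_RInt (hh x y)) by (apply ex_RInt_cont; intro w; apply hh_cont).
  rewrite (RInt_odd (hh x y)).
  2: apply hh_cont.
  2: { intro w. unfold hh. rewrite rho_even. replace (- w * LL x y) with (- (w * LL x y)) by ring.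
       rewrite sin_neg. ring. }
  rewrite (RInt_even (gg x y)).
  2: apply gg_cont.
  2: { intro w. unfold gg. rewrite rho_even. replace (- w * LL x y) with (- (w * LL x y)) by ring.
       rewrite cos_neg. ring. }
  rewrite (Rmult_comm Delta), RInt_sum by apply gg_cont.
  set (K := KK x y). set (L := LL x y).
  set (r := fun k => (RInt rho (INR k * Delta) (INR (S k) * Delta) : R)).
  set (c := fun k => wj Delta (S k)).
  assert (Hr0 : forall k, 0 <= r k).
  { intro k. unfold r. apply RInt_ge_0.
    - rewrite S_INR. nra.
    - apply ex_RInt_cont, rho_cont.
    - intros; apply Rlt_le, rho_pos. }
  assert (Hc : concat_inner (S m) Delta x y = sum_f_R0 (fun k => 2 * (K * cos (c k * L) * r k)) m).
  { unfold concat_inner. replace (S m - 1)%nat with m by lia.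
    apply sum_eq. intros k _. unfold inner2, tau, c; cbv beta zeta; unfold fst, snd.
    replace ((INR (S k) - 1) * Delta) with (INR k * Delta) by (rewrite S_INR; ring).
    rewrite Rint_RInt by (apply ex_RInt_cont, rho_cont). fold (r k).
    set (s := wj Delta (S k)).
    pose proof (sqrt_prod x y (2 * r k) ltac:(lra) ltac:(lra) ltac:(specialize (Hr0 k); lra)) as Hs.
    replace (2 * x * r k) with (x * (2 * r k)) by ring.
    replace (2 * y * r k) with (y * (2 * r k)) by ring.
    transitivity ((cos (s * ln x) * cos (s * ln y) + sin (s * ln x) * sin (s * ln y)) *
      (sqrt (x * (2 * r k)) * sqrt (y * (2 * r k)))); [ring|].
    rewrite Hs. unfold K, L, KK, LL.
    replace (s * (ln x - ln y)) with (s * ln x - s * ln y) by ring. rewrite cos_minus. ring. }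
  rewrite Hc. rewrite <- sum_lin.
  unfold cmod. replace ((sum_f_R0 (fun k : nat => 2 * (RInt (gg x y) (INR k * Delta) (INR (S k) * Delta) - K * cos (c k * L) * r k)) m) ^ 2 + 0 ^ 2)
    with (Rsqr (sum_f_R0 (fun k : nat => 2 * (RInt (gg x y) (INR k * Delta) (INR (S k) * Delta) - K * cos (c k * L) * r k)) m)) by (unfold Rsqr; ring).
  rewrite sqrt_Rsqr_abs.
  set (M := K * Rabs L * (Delta / 2)).
  assert (HK : 0 <= K) by apply sqrt_pos.
  eapply Rle_trans. apply Rabs_triang_gen.
  apply Rle_trans with (sum_f_R0 (fun k => (2 * M) * r k) m).
  { apply sum_Rle. intros k _. rewrite Rabs_mult, Rabs_right by lra.
    rewrite (Rmult_assoc 2 M). apply Rmult_le_compat_l; [lra|].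
    apply piece.
    - rewrite S_INR; nra.
    - apply gg_cont.
    - intros w Hw. unfold gg. fold K L.
      replace (K * rho w * cos (w * L) - K * cos (c k * L) * rho w)
        with ((K * rho w) * (cos (w * L) - cos (c k * L))) by ring.
      pose proof (rho_pos w).
      rewrite Rabs_mult, (Rabs_right (K * rho w)) by nra.
      unfold M. 
      pose proof (cos_lip (w * L) (c k * L)).
      replace (w * L - c k * L) with ((w - c k) * L) in H0 by ring.
      rewrite Rabs_mult in H0.
      assert (Rabs (w - c k) <= Delta / 2).
      { unfold c, wj. rewrite S_INR in *. apply Rabs_le. lra. }
      pose proof (Rabs_pos L). pose proof (Rabs_pos (w - c k)).
      assert (Rabs (w - c k) * Rabs L <= Delta / 2 * Rabs L) by nra.
      assert (0 <= K * rho w) by nra.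
      assert (K * rho w * Rabs (cos (w * L) - cos (c k * L)) <= K * rho w * (Delta / 2 * Rabs L)).
      { apply Rmult_le_compat_l; lra. }
      nra. }
  rewrite sum_scal. unfold r. rewrite <- RInt_sum by apply rho_cont.
  pose proof (rho_int_bound (INR (S m) * Delta) ltac:(pose proof (pos_INR (S m)); nra)).
  pose proof (KL_bound x y Hx Hy). fold K L in H0.
  pose proof (RInt_ge_0 rho 0 (INR (S m) * Delta) ltac:(pose proof (pos_INR (S m)); nra)
     ltac:(apply ex_RInt_cont, rho_cont) ltac:(intros; apply Rlt_le, rho_pos)).
  pose proof (exp_ineq1_le 1). pose proof PI_4.
  assert (2 * M <= 2 / exp 1 * Delta).
  { unfold M. replace (2 * (K * Rabs L * (Delta / 2))) with (K * Rabs L * Delta) by field.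
    apply Rmult_le_compat_r; lra. }
  assert (2 / exp 1 * PI / 2 <= 2).
  { unfold Rdiv. apply (Rmult_le_reg_r (exp 1)). lra.
    replace (2 * / exp 1 * PI * / 2 * exp 1) with PI by (field; lra). lra. }
  assert (0 <= M) by (unfold M; apply Rmult_le_pos; [apply Rmult_le_pos; [lra|apply Rabs_pos]|lra]).
  set (I := (RInt rho 0 (INR (S m) * Delta) : R)) in *.
  apply Rle_trans with (2 / exp 1 * Delta * I). { apply Rmult_le_compat_r; lra. }
  apply Rle_trans with (2 / exp 1 * Delta * (PI / 2)).
  { apply Rmult_le_compat_l; [|lra]. apply Rmult_le_pos; [|lra].
    unfold Rdiv; apply Rmult_le_pos; [lra|]. apply Rlt_le, Rinv_0_lt_compat; lra. }
  replace (2 / exp 1 * Delta * (PI / 2)) with ((2 / exp 1 * PI / 2) * Delta) by (field; lra).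
  apply Rmult_le_compat_r; lra.
Qed.
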